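(* Let $\Lambda$ be a unital commutative ring and $q$ a non-negative integer. A Lie algebra $\mathfrak g$ over $\Lambda$ is $q$-capable if and only if $\mathfrak g\cong\operatorname{IDer}(\mathfrak m,q)$ for some Lie algebra $\mathfrak m$ over $\Lambda$.
   Context: $Z_q(\mathfrak m)=\{e\in Z(\mathfrak m)\mid qe=0\}$, where $Z(\mathfrak m)$ is the center of $\mathfrak m$. A Lie algebra $\mathfrak g$ is $q$-capable if $\mathfrak g\cong\mathfrak m/Z_q(\mathfrak m)$ for some Lie algebra $\mathfrak m$. For a Lie algebra $\mathfrak m$, $\operatorname{Der}(\mathfrak m)$ is the Lie algebra of derivations (bracket $[d,d']=dd'-d'd$), $d_m$ is the inner derivation $m'\mapsto[m,m']$, $\operatorname{Der}(\mathfrak m)\times q\mathfrak m$ is the Lie algebra with bracket $[(d,qm),(d',qm')]=([d,d'],q[m,m'])$, and $\operatorname{IDer}(\mathfrak m,q)=\{(d_m,qm)\mid m\in\mathfrak m\}$ is its Lie subalgebra of inner $q$-derivations. *)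

(* Defs.v *)
From HB Require Import structures.
From mathcomp Require Import all_boot all_algebra.
Set Implicit Arguments. Unset Strict Implicit. Unset Printing Implicit Defensive.
Import GRing.Theory.
Local Open Scope ring_scope.

Record lieAlgebra (R : comPzRingType) := LieAlgebra {
  lie_carrier :> lmodType R;
  lie_br : lie_carrier -> lie_carrier -> lie_carrier;
  lie_br_linl : forall (a : R) (x y z : lie_carrier),
      lie_br (a *: x + y) z = a *: lie_br x z + lie_br y z;
  lie_br_linr : forall (a : R) (x y z : lie_carrier),
      lie_br x (a *: y + z) = a *: lie_br x y + lie_br x z;
  lie_br_alt : forall x : lie_carrier, lie_br x x = 0;
  lie_br_jacobi : forall x y z : lie_carrier,
      lie_br x (lie_br y z) + lie_br y (lie_br z x) + lie_br z (lie_br x y) = 0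
}.
Arguments lie_br {R l}.

Definition Zq (R : comPzRingType) (m : lieAlgebra R) (q : nat) (e : m) : Prop :=
  (forall x : m, lie_br e x = 0) /\ e *+ q = 0.

Definition lie_hom (R : comPzRingType) (m g : lieAlgebra R) (f : m -> g) : Prop :=
  (forall (a : R) (x y : m), f (a *: x + y) = a *: f x + f y) /\
  (forall x y : m, f (lie_br x y) = lie_br (f x) (f y)).

(* g is q-capable: g ≅ m / Z_q(m) for some Lie algebra m, i.e. (first
   isomorphism theorem form) there is a surjective Lie homomorphism
   m -> g whose kernel is exactly Z_q(m). *)
Definition q_capable (R : comPzRingType) (q : nat) (g : lieAlgebra R) : Prop :=
  exists (m : lieAlgebra R) (f : m -> g),
    lie_hom f /\ (forall y : g, exists x : m, f x = y) /\
    (forall x : m, f x = 0 <-> Zq q x).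

Definition inner_der (R : comPzRingType) (m : lieAlgebra R) (x : m) : m -> m :=
  fun y => lie_br x y.

(* g ≅ IDer(m,q): a bijection phi from g onto
   IDer(m,q) = { (d_x, q x) | x in m } ⊆ Der(m) × q m   (elements of the
   ambient Der(m) × q m are represented as pairs in (m -> m) * m),
   which is R-linear for the pointwise module structure and carries the
   bracket of g to the bracket [(d,qx),(d',qx')] = ([d,d'], q[x,x']) with
   [d,d'] = d d' - d' d. *)
Definition iso_IDer (R : comPzRingType) (q : nat) (g m : lieAlgebra R)
    (phi : g -> ((m -> m) * m)%type) : Prop :=
  injective phi /\
  (forall u : ((m -> m) * m)%type,
      (exists x : g, phi x = u) <-> (exists y : m, u = (inner_der y, y *+ q))) /\
  (forall (a : R) (x y : g),
      phi (a *: x + y) =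
        ((fun z => a *: (phi x).1 z + (phi y).1 z), a *: (phi x).2 + (phi y).2)) /\
  (forall (x y : g) (m1 m2 : m),
      phi x = (inner_der m1, m1 *+ q) -> phi y = (inner_der m2, m2 *+ q) ->
      phi (lie_br x y) =
        ((fun z => (phi x).1 ((phi y).1 z) - (phi y).1 ((phi x).1 z)),
         (lie_br m1 m2) *+ q)).

Definition isomorphic_IDer (R : comPzRingType) (q : nat) (g m : lieAlgebra R) : Prop :=
  exists phi : g -> ((m -> m) * m)%type, iso_IDer q phi.

(* Main.v *)
Require Import Defs.
From mathcomp Require Import all_boot all_algebra.
From Stdlib Require Import FunctionalExtensionality IndefiniteDescription.
Import GRing.Theory.
Local Open Scope ring_scope.

Section LieFacts.
Variables (R : comPzRingType) (L : lieAlgebra R).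
Implicit Types x y z : L.

Lemma brDl x y z : lie_br (x + y) z = lie_br x z + lie_br y z.
Proof. by have := lie_br_linl 1 x y z; rewrite !scale1r. Qed.
Lemma brDr x y z : lie_br z (x + y) = lie_br z x + lie_br z y.
Proof. by have := lie_br_linr 1 z x y; rewrite !scale1r. Qed.
Lemma br0l z : lie_br (0 : L) z = 0.
Proof. by apply: (@addrI _ (lie_br 0 z)); rewrite -brDl !addr0. Qed.
Lemma br0r z : lie_br z (0 : L) = 0.
Proof. by apply: (@addrI _ (lie_br z 0)); rewrite -brDr !addr0. Qed.
Lemma brZl a x z : lie_br (a *: x) z = a *: lie_br x z.
Proof. by rewrite -[a *: x]addr0 lie_br_linl br0l addr0. Qed.
Lemma brZr a x z : lie_br z (a *: x) = a *: lie_br z x.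
Proof. by rewrite -[a *: x]addr0 lie_br_linr br0r addr0. Qed.
Lemma brNl x z : lie_br (- x) z = - lie_br x z.
Proof. by rewrite -scaleN1r brZl scaleN1r. Qed.
Lemma brBl x y z : lie_br (x - y) z = lie_br x z - lie_br y z.
Proof. by rewrite brDl brNl. Qed.
Lemma brMnl x z n : lie_br (x *+ n) z = lie_br x z *+ n.
Proof. by elim: n => [|n IH]; rewrite ?br0l // !mulrS brDl IH. Qed.
Lemma brMnr x z n : lie_br z (x *+ n) = lie_br z x *+ n.
Proof. by elim: n => [|n IH]; rewrite ?br0r // !mulrS brDr IH. Qed.
Lemma br_anti x y : lie_br x y = - lie_br y x.
Proof.
have := lie_br_alt (x + y); rewrite brDl !brDr !lie_br_alt add0r addr0.
by move/eqP; rewrite addr_eq0 => /eqP.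
Qed.
Lemma brNr x z : lie_br z (- x) = - lie_br z x.
Proof. by rewrite -scaleN1r brZr scaleN1r. Qed.
Lemma br_der x y z :
  lie_br (lie_br x y) z = lie_br x (lie_br y z) - lie_br y (lie_br x z).
Proof.
have J := lie_br_jacobi x y z.
have E : lie_br z (lie_br x y) = - (lie_br x (lie_br y z) + lie_br y (lie_br z x)).
  by apply/eqP; rewrite -addr_eq0 addrC J.
by rewrite br_anti E opprK (br_anti z x) brNr.
Qed.
End LieFacts.

Lemma hom_add (R : comPzRingType) (m g : lieAlgebra R) (f : m -> g) :
  lie_hom f -> (forall x y, f (x + y) = f x + f y) /\ (forall x y, f (x - y) = f x - f y).
Proof.
move=> [fl _].
have fD x y : f (x + y) = f x + f y by have := fl 1 x y; rewrite !scale1r.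
have f0 : f 0 = 0 by apply: (@addrI _ (f 0)); rewrite -fD !addr0.
split=> // x y; rewrite fD; congr (_ + _).
by have := fl (-1) y 0; rewrite !addr0 !scaleN1r f0 addr0.
Qed.

Theorem corollary4p3 (R : comPzRingType) (q : nat) (g : lieAlgebra R) :
  q_capable q g <-> exists m : lieAlgebra R, isomorphic_IDer q g m.
Proof.
split.
- move=> [m [f [fh [fs fk]]]].
  have [fD fB] := @hom_add _ _ _ f fh.
  have [fl fb] := fh.
  exists m.
  have fs' : forall y, exists x, f x == y by move=> y; have [x <-] := fs y; exists x.
  pose pre y := xchoose (fs' y).
  have preP y : f (pre y) = y by apply/eqP; have := xchooseP (fs' y).
  have same x x' : f x = f x' -> inner_der x = inner_der x' /\ x *+ q = x' *+ q.
    move=> E; have [Z1 Z2] : Zq q (x - x') by apply/fk; rewrite fB E subrr.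
    split; last by apply/eqP; rewrite -subr_eq0 -mulrnBl Z2.
    by apply: functional_extensionality => z; apply/eqP; rewrite -subr_eq0 /inner_der -brBl Z1.
  have same' x x' : inner_der x = inner_der x' -> x *+ q = x' *+ q -> f x = f x'.
    move=> E1 E2; apply/eqP; rewrite -subr_eq0 -fB; apply/eqP/fk; split.
      by move=> z; rewrite brBl; have := congr1 (fun h => h z) E1; rewrite /inner_der => ->; rewrite subrr.
    by rewrite mulrnBl E2 subrr.
  exists (fun y => (inner_der (pre y), pre y *+ q)); split; [|split; [|split]].
  + move=> y y' [E1 E2]; by rewrite -(preP y) -(preP y') (same' _ _ E1 E2).
  + move=> u; split.
      by move=> [x <-]; exists (pre x).
    move=> [y ->]; exists (f y); have [E1 E2] := same _ _ (preP (f y)).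
    by rewrite E1 E2.
  + move=> a x y /=.
    have [E1 E2] := same (pre (a *: x + y)) (a *: pre x + pre y) ltac:(by rewrite fl !preP).
    rewrite E1 E2; congr (_, _).
      by apply: functional_extensionality => z; rewrite /inner_der lie_br_linl.
    by rewrite mulrnDl scalerMnr.
  + move=> x y m1 m2 Ex Ey; case: Ex => Ex1 Ex2; case: Ey => Ey1 Ey2 /=.
    have [E1 E2] := same (pre (lie_br x y)) (lie_br (pre x) (pre y)) ltac:(by rewrite fb !preP).
    rewrite E1 E2; congr (_, _).
      by apply: functional_extensionality => z; rewrite /inner_der br_der.
    rewrite -brMnl Ex2 brMnl -brMnr Ey2 brMnr; by congr (_ *+ _).
- move=> [m [phi [phinj [img [lin br]]]]].
  have fex : forall x : m, { y : g | phi y = (inner_der x, x *+ q) }.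
    by move=> x; apply: constructive_indefinite_description; apply/img; exists x.
  pose f x := sval (fex x).
  have fP x : phi (f x) = (inner_der x, x *+ q) := svalP (fex x).
  have phi0 : phi 0 = ((fun _ => 0), 0).
    have := lin 1 0 0; rewrite scale1r addr0.
    case: (phi 0) => p1 p2 /= [E1 E2]; congr (_, _).
      apply: functional_extensionality => z.
      have := congr1 (fun h => h z) E1 => /= E.
      by symmetry; apply: (@addrI _ (p1 z)); rewrite addr0 {1}E scale1r.
    by symmetry; apply: (@addrI _ p2); rewrite addr0 {1}E2 scale1r.
  exists m, f; split; [split|split].
  + move=> a x y; apply: phinj; rewrite lin !fP /=; congr (_, _).
      by apply: functional_extensionality => z; rewrite /inner_der lie_br_linl.
    by rewrite mulrnDl scalerMnr.
  + move=> x y; apply: phinj; rewrite (br _ _ _ _ (fP x) (fP y)) fP /=; congr (_, _).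
    by rewrite !fP; apply: functional_extensionality => z; rewrite /inner_der br_der.
  + move=> y; have [x E] := (img (phi y)).1 (ex_intro _ y erefl).
    by exists x; apply: phinj; rewrite fP E.
  + move=> x; split.
      move=> E; have := fP x; rewrite E phi0 => -[E1 E2]; split=> // z.
      by have := congr1 (fun h => h z) E1; rewrite /inner_der => <-.
    move=> [Z1 Z2]; apply: phinj; rewrite fP phi0 Z2; congr (_, _).
    by apply: functional_extensionality => z; exact: Z1.
Qed.
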